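(* Fix $m\ge1$ and $i_1,\dots,i_m\in\{1,\dots,n\}$. For every integer $k\ge0$ and $r\in\{0,1\}$, $$\operatorname{ad}(X)^{2k+r}\big([x^m;i_1,\dots,i_m]\big)=(-1)^k\,k!\,\Big(\tfrac{\sqrt{-1}}{\sqrt2}\Big)^r\sum_{t=0}^{k}[\eta^tx^{m-k-t-r}\gamma^r\partial^{k-t};i_1,\dotsc,i_m],$$ where $[x^m;i_1,\dots,i_m]=x^{i_1}\cdots x^{i_m}$.
   Context: Fix $n\ge1$ and an invertible complex matrix $\eta=(\eta^{ij})$ with $\eta^{ij}=\eta^{ji}$. $W(2n|n)$ is the associative superalgebra generated by even $x^1,\dots,x^n,\partial_1,\dots,\partial_n$ and odd $\gamma^1,\dots,\gamma^n$ with relations $x^ix^j=x^jx^i$, $\partial_i\partial_j=\partial_j\partial_i$, $\partial_ix^j-x^j\partial_i=\delta_i^j$, $\gamma^i$ commuting with all $x^j,\partial_j$, $\gamma^i\gamma^j+\gamma^j\gamma^i=2\eta^{ij}$; $\partial^i:=\eta^{ij}\partial_j$ (summed). $X=\frac{\sqrt{-1}}{\sqrt2}\gamma^i\partial_i$, $\operatorname{ad}(X)(b)=Xb-(-1)^{|b|}bX$. Bracket symbol: for integers $a,p,q,t$ with $a,q,t\ge0$ and $2a+p+q+t=m$, and indices $i_1,\dots,i_m$, if $p<0$ the symbol $[\eta^ax^p\gamma^q\partial^t;i_1,\dots,i_m]$ is $0$; otherwise, for $\sigma\in S_m$ put $T_\sigma:=\prod_{l=0}^{a-1}\eta^{i_{\sigma(2l+1)}i_{\sigma(2l+2)}}\cdot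 x^{i_{\sigma(2a+1)}}\cdots x^{i_{\sigma(2a+p)}}\cdot\gamma^{i_{\sigma(2a+p+1)}}\cdots\gamma^{i_{\sigma(2a+p+q)}}\cdot\partial^{i_{\sigma(2a+p+q+1)}}\cdots\partial^{i_{\sigma(m)}}$ and $[\eta^ax^p\gamma^q\partial^t;i_1,\dots,i_m]:=\frac1{2^aa!p!t!}\sum_{\sigma\in S_m}T_\sigma$ (factors with exponent $0$ omitted). *)

(* Defs.v *)
From HB Require Import structures.
From mathcomp Require Import all_boot all_order all_algebra.
From mathcomp Require Import fingroup perm.
Set Implicit Arguments. Unset Strict Implicit. Unset Printing Implicit Defensive.
Import Order.TTheory GRing.Theory Num.Theory.
Local Open Scope ring_scope.

Section WeylClifford.
Variables (C : numClosedFieldType) (A : algType C) (n : nat).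
Variables (eta : 'M[C]_n) (x d g : 'I_n -> A).

(* The defining relations of W(2n|n) for the images x^i, partial_i, gamma^i
   in an associative C-algebra A. *)
Definition WC_relations : Prop :=
  [/\ (forall i j, x i * x j = x j * x i),
      (forall i j, d i * d j = d j * d i),
      (forall i j, d i * x j - x j * d i = (i == j)%:R),
      (forall i j, g i * x j = x j * g i) &
      (forall i j, g i * d j = d j * g i) ] /\
  (forall i j, g i * g j + g j * g i = (2 * eta i j)%:A).

Definition dup (i : 'I_n) : A := \sum_(j < n) eta i j *: d j.

Definition cX : C := 'i / sqrtC 2.

Definition Xop : A := cX *: \sum_(i < n) g i * d i.

(* ad(X)(b) = X b - (-1)^{|b|} b X, for b homogeneous of parity pb *)
Definition adX (pb : bool) (b : A) : A := Xop * b - (-1) ^+ pb * b * Xop.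

(* ad(X)^j applied to a homogeneous b of parity p; since X is odd,
   ad(X)^j' b has parity p (+) odd j'. *)
Fixpoint adXn (j : nat) (p : bool) (b : A) : A :=
  match j with
  | 0 => b
  | j'.+1 => adX (p (+) odd j') (adXn j' p b)
  end.

Fixpoint eta_pairs (w : seq 'I_n) : C :=
  match w with
  | a :: b :: r => eta a b * eta_pairs r
  | _ => 1
  end.

(* T_sigma for the word w = (i_{sigma(1)}, ..., i_{sigma(m)}) *)
Definition Tword (a p q t : nat) (w : seq 'I_n) : A :=
  eta_pairs (take (2 * a) w) *:
  ((\prod_(j <- take p (drop (2 * a) w)) x j) *
   (\prod_(j <- take q (drop (2 * a + p) w)) g j) *
   (\prod_(j <- take t (drop (2 * a + p + q) w)) dup j)).

(* The bracket symbol [eta^a x^p gamma^q partial^t ; i_1, ..., i_m]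
   (meant for 2a+p+q+t = m); it is 0 when p < 0. *)
Definition bracket (m a : nat) (p : int) (q t : nat) (i : 'I_m -> 'I_n) : A :=
  match p with
  | Negz _ => 0
  | Posz p' =>
      ((2 ^ a * a`! * p'`! * t`!)%N%:R)^-1 *:
      \sum_(s : 'S_m) Tword a p' q t [seq i (s l) | l <- enum 'I_m]
  end.

End WeylClifford.

(* Main.v *)
Require Import Defs.
From HB Require Import structures.
From mathcomp Require Import all_boot all_order all_algebra.
From mathcomp Require Import fingroup perm.
From mathcomp Require Import zify ring lra.
Import Order.TTheory GRing.Theory Num.Theory.
Local Open Scope ring_scope.
Set Implicit Arguments. Unset Strict Implicit. Unset Printing Implicit Defensive.

Definition ins {T} (j : nat) (h : T) (v : seq T) := take j v ++ h :: drop j v.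
Definition del {T} (j : nat) (v : seq T) := take j v ++ drop j.+1 v.
Definition word {T} m (i : 'I_m -> T) (s : 'S_m) := [seq i (s l) | l <- enum 'I_m].

Lemma size_ins T j (h : T) v : (j <= size v)%N -> size (ins j h v) = (size v).+1.
Proof. by move=> hj; rewrite /ins size_cat /= size_take size_drop; case: ltnP hj; lia. Qed.

Lemma nth_ins T (x0 : T) j h v k : (j <= size v)%N ->
  nth x0 (ins j h v) k = if (k < j)%N then nth x0 v k else if k == j then h else nth x0 v k.-1.
Proof.
move=> hj; rewrite /ins nth_cat size_take.
have -> : (if (j < size v)%N then j else size v) = j by case: ltnP hj; lia.
case: ltnP => hk; first by rewrite nth_take.
case: eqP => [->|hne]; first by rewrite subnn.
have : (k - j = (k - j).-1.+1)%N by lia.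
move=> ->; rewrite /= nth_drop; congr nth; lia.
Qed.

Lemma size_word T m (i : 'I_m -> T) s : size (word i s) = m.
Proof. by rewrite /word size_map size_enum_ord. Qed.

Lemma nth_word T m (i : 'I_m -> T) s x0 (k : 'I_m) : nth x0 (word i s) k = i (s k).
Proof.
rewrite /word (nth_map k) ?size_enum_ord // nth_ord_enum //.
Qed.

Lemma nth_word' T m (i : 'I_m -> T) s x0 k (hk : (k < m)%N) :
  nth x0 (word i s) k = i (s (Ordinal hk)).
Proof. by rewrite -(nth_word i s x0 (Ordinal hk)). Qed.

Lemma word_lift T m (i : 'I_m.+1 -> T) (e l : 'I_m.+1) (s : 'S_m) :
  word i (lift_perm e l s) = ins e (i l) (word (fun k => i (lift l k)) s).
Proof.
have he : (e <= size (word (fun k => i (lift l k)) s))%N by rewrite size_word -ltnS.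
apply: (@eq_from_nth _ (i l)); first by rewrite size_ins // !size_word.
rewrite size_word => k hk.
rewrite (nth_word' _ _ _ hk) nth_ins //.
case: (unliftP e (Ordinal hk)) => [k'|] hK; last first.
  have ke : k = e by move: hK => /(congr1 val).
  by rewrite hK lift_perm_id ke ltnn eqxx.
rewrite hK lift_perm_lift.
have hkv : k = bump e k' by move: hK => /(congr1 val).
rewrite /bump in hkv.
have k'm : (k' < m)%N := ltn_ord k'.
move: hkv k'm; move Ek : (nat_of_ord k') => kk hkv k'm.
case: ltnP => h1.
  have hk' : (k < m)%N by move: hkv h1 k'm; case: (leqP e kk); lia.
  rewrite (nth_word' _ _ _ hk'); congr (i (lift l (s _))); apply: val_inj => /=.
  by rewrite Ek; move: hkv h1; case: (leqP e kk); lia.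
have -> : (k == e) = false by apply/eqP; move: hkv h1; case: (leqP e kk); lia.
have hk' : (k.-1 < m)%N by lia.
rewrite (nth_word' _ _ _ hk'); congr (i (lift l (s _))); apply: val_inj => /=.
by rewrite Ek; move: hkv h1; case: (leqP e kk); lia.
Qed.

Section PermSum.
Variable (R : Type) (idx : R) (op : Monoid.com_law idx).

Lemma fiber_perm m (e l : 'I_m.+1) (F : 'S_m.+1 -> R) :
  \big[op/idx]_(s : 'S_m.+1 | s e == l) F s = \big[op/idx]_(s : 'S_m) F (lift_perm e l s).
Proof.
rewrite (reindex (lift_perm e l)); last first.
  pose ulsf i (s : 'S_m.+1) k := odflt k (unlift (s i) (s (lift i k))).
  have ulsfK i (s : 'S_m.+1) k: lift (s i) (ulsf i s k) = s (lift i k).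
    rewrite /ulsf; have:= neq_lift i k.
    by rewrite -(can_eq (permK s)) => /unlift_some[] ? ? ->.
  have inj_ulsf: injective (ulsf e _).
    move=> s; apply: can_inj (ulsf (s e) s^-1%g) _ => k'.
    by rewrite {1}/ulsf ulsfK !permK liftK.
  exists (fun s => perm (inj_ulsf s)) => [s _ | s].
    by apply/permP=> k'; rewrite permE /ulsf lift_perm_lift lift_perm_id liftK.
  move/(s _ =P _) => si0; apply/permP=> k.
  case: (unliftP e k) => [k'|] ->; rewrite ?lift_perm_id //.
  by rewrite lift_perm_lift -si0 permE ulsfK.
by apply: eq_bigl => s; rewrite lift_perm_id eqxx.
Qed.

Lemma sum_perm_pos m (e : 'I_m.+1) (F : 'S_m.+1 -> R) :
  \big[op/idx]_(s : 'S_m.+1) F s =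
  \big[op/idx]_(l : 'I_m.+1) \big[op/idx]_(s : 'S_m) F (lift_perm e l s).
Proof.
rewrite (partition_big (fun s : 'S_m.+1 => s e) predT) //.
by apply: eq_bigr => l _; rewrite -fiber_perm.
Qed.

Lemma sum_perm_val m (l : 'I_m.+1) (F : 'S_m.+1 -> R) :
  \big[op/idx]_(s : 'S_m.+1) F s =
  \big[op/idx]_(e : 'I_m.+1) \big[op/idx]_(s : 'S_m) F (lift_perm e l s).
Proof.
rewrite (partition_big (fun s : 'S_m.+1 => (s^-1)%g l) predT) //.
apply: eq_bigr => e _; rewrite -fiber_perm; apply: eq_bigl => s /=.
by apply/eqP/eqP => [<-|<-]; rewrite ?permKV ?permK.
Qed.
End PermSum.


Arguments ins {T} j h v : simpl never.
Arguments del {T} j v : simpl never.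
Section SeqLemmas.
Variable T : Type.
Implicit Types (v : seq T) (h : T).

Lemma takeS k (y : T) v : take k.+1 (y :: v) = y :: take k v.
Proof. by []. Qed.
Lemma dropS k (y : T) v : drop k.+1 (y :: v) = drop k v.
Proof. by []. Qed.

Lemma ins0 h v : ins 0 h v = h :: v.
Proof. by rewrite /ins take0 drop0. Qed.
Lemma insS j h y v : ins j.+1 h (y :: v) = y :: ins j h v.
Proof. by rewrite /ins. Qed.
Lemma del0 y v : del 0 (y :: v) = v.
Proof. by rewrite /del take0 /= drop0. Qed.
Lemma delS j y v : del j.+1 (y :: v) = y :: del j v.
Proof. by rewrite /del. Qed.

Lemma take_ins_le k j h v : (k <= j)%N -> (j <= size v)%N -> take k (ins j h v) = take k v.
Proof.
elim: j k v => [|j IH] [|k] [|y v] // kj js; rewrite ?take0 //.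
by rewrite insS [take _ _]/= IH.
Qed.

Lemma drop_ins_le k j h v : (k <= j)%N -> (j <= size v)%N ->
  drop k (ins j h v) = ins (j - k) h (drop k v).
Proof.
elim: j k v => [|j IH] [|k] [|y v] // kj js; rewrite ?drop0 ?subn0 //.
by rewrite insS subSS -IH.
Qed.

Lemma take_ins_gt k j h v : (j < k)%N -> (j <= size v)%N ->
  take k (ins j h v) = ins j h (take k.-1 v).
Proof.
elim: j k v => [|j IH] [|k] [|y v] // kj js; rewrite ?ins0 //.
by rewrite insS /= IH //; case: k kj.
Qed.

Lemma drop_ins_gt k j h v : (j < k)%N -> (j <= size v)%N ->
  drop k (ins j h v) = drop k.-1 v.
Proof.
elim: j k v => [|j IH] [|k] [|y v] // kj js; rewrite ?ins0 //.
by rewrite insS /= IH //; case: k kj.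
Qed.

Lemma take_del_le k j v : (k <= j)%N -> take k (del j v) = take k v.
Proof.
elim: j k v => [|j IH] [|k] [|y v] // kj; rewrite ?take0 //.
by rewrite delS /= IH.
Qed.

Lemma drop_del_le k j v : (k <= j)%N -> (j < size v)%N ->
  drop k (del j v) = del (j - k) (drop k v).
Proof.
elim: j k v => [|j IH] [|k] [|y v] // kj js; rewrite ?drop0 ?subn0 //.
by rewrite delS /= IH.
Qed.

Lemma take_del_gt k j v : (j < k)%N -> (j < size v)%N ->
  take k.-1 (del j v) = del j (take k v).
Proof.
elim: j k v => [|j IH] [|k] [|y v] // kj js; rewrite ?del0 //.
case: k kj => [|k] kj; first lia.
by rewrite delS takeS delS takeS -IH.
Qed.

Lemma drop_del_ge k j v : (j <= k)%N -> (j < size v)%N ->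
  drop k (del j v) = drop k.+1 v.
Proof.
elim: j k v => [|j IH] [|k] [|y v] // kj js; rewrite ?del0 ?drop0 //.
- by rewrite dropS drop0.
by rewrite delS !dropS IH.
Qed.

Lemma nth_take_del x0 j v : (j < size v)%N -> v = ins j (nth x0 v j) (del j v).
Proof.
elim: j v => [|j IH] [|y v] // js; first by rewrite del0 ins0.
by rewrite delS insS -IH.
Qed.

Lemma del_ins j h v : (j <= size v)%N -> del j (ins j h v) = v.
Proof.
elim: j v => [|j IH] [|y v] // js; rewrite ?ins0 ?del0 //.
by rewrite insS delS IH.
Qed.

Lemma size_del j v : (j < size v)%N -> size (del j v) = (size v).-1.
Proof.
elim: j v => [|j IH] [|y v] // js; rewrite ?del0 //.
by rewrite delS /= IH //; case: v js.
Qed.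

Lemma nth_ins_eq x0 j h v : (j <= size v)%N -> nth x0 (ins j h v) j = h.
Proof. by move=> js; rewrite nth_ins // ltnn eqxx. Qed.

End SeqLemmas.


Section Alg.
Variables (C : numClosedFieldType) (A : algType C) (n : nat).
Variables (eta : 'M[C]_n) (x d g : 'I_n -> A).
Hypothesis etaS : forall i j, eta i j = eta j i.
Hypothesis Hxx : forall i j, x i * x j = x j * x i.
Hypothesis Hdd : forall i j, d i * d j = d j * d i.
Hypothesis Hdx : forall i j, d i * x j - x j * d i = (i == j)%:R.
Hypothesis Hgx : forall i j, g i * x j = x j * g i.
Hypothesis Hgd : forall i j, g i * d j = d j * g i.
Hypothesis Hgg : forall i j, g i * g j + g j * g i = (2 * eta i j)%:A.

Local Notation D := (dup eta d).
Local Notation T := (Tword eta x d g).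

Lemma comm_prod (f : 'I_n -> A) (y : A) s :
  (forall j, f j * y = y * f j) -> (\prod_(j <- s) f j) * y = y * \prod_(j <- s) f j.
Proof.
move=> H; elim: s => [|a s IH]; first by rewrite !big_nil mul1r mulr1.
by rewrite !big_cons -mulrA IH !mulrA H.
Qed.

Lemma prod_ins (f : 'I_n -> A) e h s :
  (forall i j, f i * f j = f j * f i) ->
  \prod_(j <- ins e h s) f j = f h * \prod_(j <- s) f j.
Proof.
move=> H; rewrite /ins big_cat /= big_cons mulrA comm_prod // -mulrA -big_cat /=.
by rewrite cat_take_drop.
Qed.

Lemma DD i j : D i * D j = D j * D i.
Proof.
rewrite /dup !mulr_suml.
under eq_bigr do rewrite mulr_sumr.
under [RHS]eq_bigr do rewrite mulr_sumr.
rewrite exchange_big; apply: eq_bigr => k _; apply: eq_bigr => l _.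
by rewrite -!scalerAl -!scalerAr Hdd !scalerA mulrC.
Qed.

Lemma Dg i j : D i * g j = g j * D i.
Proof.
rewrite /dup mulr_suml mulr_sumr; apply: eq_bigr => k _.
by rewrite -!scalerAl -!scalerAr Hgd.
Qed.

Lemma Dx i h : D i * x h = x h * D i + (eta i h)%:A.
Proof.
rewrite /dup mulr_suml mulr_sumr.
have -> : (eta i h)%:A = \sum_(k < n) eta i k *: ((k == h)%:R : A).
  rewrite (bigD1 h) //= eqxx big1 ?addr0 // => k /negPf ->; by rewrite scaler0.
rewrite -big_split; apply: eq_bigr => k _ /=.
by rewrite -!scalerAl -!scalerAr -scalerDr -Hdx addrC subrK.
Qed.

Lemma D_prod_x j s :
  D j * (\prod_(k <- s) x k) = (\prod_(k <- s) x k) * D j +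
    \sum_(e < size s) eta j (nth j s e) *: \prod_(k <- del e s) x k.
Proof.
elim: s => [|a s IH]; first by rewrite !big_nil big_ord0 mul1r mulr1 addr0.
rewrite big_cons mulrA Dx mulrDl -mulrA IH mulrDr mulrA.
rewrite big_ord_recl del0 [nth _ _ 0]/=.
rewrite -!addrA; congr (_ + _).
rewrite mulr_algl addrC; congr (_ + _).
rewrite mulr_sumr; apply: eq_bigr => e _.
by rewrite lift0 delS big_cons [nth _ _ _.+1]/= scalerAr.
Qed.


Lemma TW_x a p q t j h v : (2 * a <= j)%N -> (j < 2 * a + p)%N -> (j <= size v)%N ->
  T a p q t (ins j h v) = x h * T a p.-1 q t v.
Proof.
move=> h1 h2 h3; rewrite /Tword take_ins_le // drop_ins_le //.
rewrite take_ins_gt; try (rewrite ?size_drop; lia).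
rewrite (drop_ins_gt (k := (2 * a + p)%N)) ; try lia.
rewrite (drop_ins_gt (k := (2 * a + p + q)%N)) ; try lia.
rewrite prod_ins // -scalerAr !mulrA.
have -> : ((2 * a + p).-1 = 2 * a + p.-1)%N by lia.
by have -> : ((2 * a + p + q).-1 = 2 * a + p.-1 + q)%N by lia.
Qed.

Lemma TW_g a p t h v : (2 * a + p <= size v)%N ->
  T a p 1 t (ins (2 * a + p) h v) = g h * T a p 0 t v.
Proof.
move=> h3; rewrite /Tword take_ins_le ; try lia.
rewrite drop_ins_le ; try lia.
have -> : (2 * a + p - 2 * a = p)%N by lia.
rewrite take_ins_le //; last by rewrite size_drop; lia.
rewrite (drop_ins_le (k := (2 * a + p)%N)) // subnn ins0.
rewrite (drop_ins_gt (k := (2 * a + p + 1)%N)) ; try lia.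
have -> : ((2 * a + p + 1).-1 = 2 * a + p + 0)%N by lia.
rewrite takeS !take0 big_cons !big_nil.
rewrite -scalerAr !mulrA !mulr1 comm_prod //.
Qed.

Lemma TW_d a p q t j h v : (2 * a + p + q <= j)%N -> (j < 2 * a + p + q + t)%N ->
  (j <= size v)%N ->
  T a p q t (ins j h v) = T a p q t.-1 v * D h.
Proof.
move=> h1 h2 h3; rewrite /Tword take_ins_le ; try lia.
rewrite (drop_ins_le (k := (2 * a)%N)) ; try lia.
rewrite take_ins_le; try (rewrite ?size_drop; lia).
rewrite (drop_ins_le (k := (2 * a + p)%N)) ; try lia.
rewrite take_ins_le; try (rewrite ?size_drop; lia).
rewrite (drop_ins_le (k := (2 * a + p + q)%N)) ; try lia.
rewrite take_ins_gt; try (rewrite ?size_drop; lia).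
rewrite prod_ins; last by move=> *; apply: DD.
rewrite -(@comm_prod (dup eta d) (D h)); last by move=> ?; apply: DD.
by rewrite -scalerAl !mulrA.
Qed.

Lemma EP_ins N j h u : (j <= N)%N -> (j <= size u)%N -> odd (size u) ->
  eta_pairs eta (ins j h u) =
  eta h (nth h u (j - odd j)) * eta_pairs eta (del (j - odd j) u).
Proof.
elim: N j u => [|N IH] j u.
  rewrite leqn0 => /eqP -> _; case: u => [|u0 u] // _.
  by rewrite /= subnn del0.
case: j => [|[|j]] hj hs; case: u hs => [|u0 [|u1 u]] // hs ho.
- by rewrite /= etaS.
- by rewrite /= ?del0 etaS.
rewrite !insS.
have oj : odd j -> (0 < j)%N by case: j {hj hs ho}.
have -> : (j.+2 - odd j.+2 = (j - odd j).+2)%N.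
  by rewrite /= negbK; case: (odd j) oj => /= oj; [have := oj isT|]; lia.
rewrite !delS [eta_pairs _ (_ :: _ :: _)]/= [eta_pairs _ (u0 :: _)]/= [nth _ _ _.+2]/= IH ; try lia.
- by rewrite mulrCA.
- by move: hs => /=; lia.
by move: ho; rewrite /= negbK.
Qed.


Lemma TW_pair a p q t j h v : (j < 2 * a)%N -> (2 * a <= (size v).+1)%N ->
  T a p q t (ins j h v) =
  eta h (nth h v (j - odd j)) *: T a.-1 p q t (del (j - odd j) v).
Proof.
move=> hj ha.
have ej : (j - odd j = 2 * j./2)%N by rewrite -halfK mul2n.
have ej2 : (j = odd j + 2 * j./2)%N by rewrite mul2n odd_double_half.
have oj : (odd j <= 1)%N by case: (odd j).
rewrite ej.
have a1 : (0 < a)%N by lia.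
have js : (j <= size v)%N by lia.
have jl : (2 * j./2 < (2 * a).-1)%N by lia.
rewrite /Tword (take_ins_gt (k := (2 * a)%N)) ; try lia.
rewrite (@EP_ins j) //; first last.
- rewrite size_takel; last lia.
  have -> : ((2 * a).-1 = (2 * a.-1).+1)%N by lia.
  by rewrite /= oddM andFb.
- rewrite size_takel; lia.
rewrite ej nth_take // -take_del_gt; try lia.
rewrite !drop_ins_gt; try lia.
rewrite !drop_del_ge; try lia.
have -> : ((2 * a).-1.-1 = 2 * a.-1)%N by lia.
have -> : ((2 * a).-1 = (2 * a.-1).+1)%N by lia.
have -> : ((2 * a + p).-1 = (2 * a.-1 + p).+1)%N by lia.
have -> : ((2 * a + p + q).-1 = (2 * a.-1 + p + q).+1)%N by lia.
by rewrite scalerA.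
Qed.

Lemma TW_comm a p q t j w : (2 * a + p <= size w)%N ->
  D j * T a p q t w = T a p q t w * D j +
   \sum_(e < p) eta j (nth j w (2 * a + e)) *: T a p.-1 q t (del (2 * a + e) w).
Proof.
move=> hw; rewrite /Tword -scalerAr !mulrA D_prod_x.
rewrite size_takel; last by rewrite size_drop; lia.
rewrite mulrDl mulrDl scalerDr; congr (_ + _).
  rewrite -scalerAl; congr (_ *: _).
  rewrite -!mulrA; congr (_ * _).
  rewrite mulrA -(@comm_prod g (D j)); last by move=> k; rewrite Dg.
  rewrite -mulrA; congr (_ * _).
  by rewrite (@comm_prod (dup eta d) (D j)) //; move=> k; rewrite DD.
rewrite !mulr_suml scaler_sumr; apply: eq_bigr => e _; have he := ltn_ord e.
rewrite -!scalerAl scalerA mulrC -scalerA.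
rewrite nth_take // nth_drop; congr (_ *: _).
rewrite take_del_le; last lia.
1: by [].
rewrite drop_del_le; try lia.
rewrite addKn take_del_gt //; last by rewrite size_drop; lia.
rewrite !drop_del_ge; try lia.
have -> : ((2 * a + p.-1).+1 = 2 * a + p)%N by lia.
by have -> : ((2 * a + p.-1 + q).+1 = 2 * a + p + q)%N by lia.
Qed.

End Alg.


Section U.
Variables (C : numClosedFieldType) (A : algType C) (n : nat).
Variables (eta : 'M[C]_n) (x d g : 'I_n -> A).
Hypothesis etaS : forall i j, eta i j = eta j i.
Hypothesis Hxx : forall i j, x i * x j = x j * x i.
Hypothesis Hdd : forall i j, d i * d j = d j * d i.
Hypothesis Hdx : forall i j, d i * x j - x j * d i = (i == j)%:R.
Hypothesis Hgx : forall i j, g i * x j = x j * g i.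
Hypothesis Hgd : forall i j, g i * d j = d j * g i.

Local Notation D := (dup eta d).
Local Notation T := (Tword eta x d g).

Definition U m a p q t (i : 'I_m -> 'I_n) := \sum_(s : 'S_m) T a p q t (word i s).

Lemma pos_sum m (i : 'I_m -> 'I_n) e (he : (e < m)%N) (j0 : 'I_n)
   (F : 'I_n -> seq 'I_n -> A) :
  \sum_(s : 'S_m) F (nth j0 (word i s) e) (del e (word i s)) =
  \sum_(l < m) \sum_(s : 'S_m.-1) F (i l) (word (fun k => i (lift l k)) s).
Proof.
case: m i he => [|m] i he //.
rewrite (sum_perm_pos _ (Ordinal he)); apply: eq_bigr => l _; apply: eq_bigr => s _.
by rewrite word_lift /= nth_ins_eq ?del_ins // size_word.
Qed.

Lemma ins_sum m (i : 'I_m.+1 -> 'I_n) (F : seq 'I_n -> A) :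
  \sum_(s : 'S_m.+1) F (word i s) =
  \sum_(0 <= e < m.+1) \sum_(s : 'S_m) F (ins e (i ord0) (word (fun k => i (lift ord0 k)) s)).
Proof.
rewrite (sum_perm_val _ ord0) big_mkord; apply: eq_bigr => e _; apply: eq_bigr => s _.
by rewrite word_lift.
Qed.


Lemma U_rec m a p q t (i : 'I_m.+1 -> 'I_n) : (2 * a + p + q + t = m.+1)%N -> (q <= 1)%N ->
  U a p q t i =
  p%:R *: (x (i ord0) * U a p.-1 q t (fun k => i (lift ord0 k))) +
  q%:R *: (g (i ord0) * U a p 0 t (fun k => i (lift ord0 k))) +
  t%:R *: (U a p q t.-1 (fun k => i (lift ord0 k)) * D (i ord0)) +
  (2 * a)%:R *: \sum_(l < m) eta (i ord0) (i (lift ord0 l)) *: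
        U a.-1 p q t (fun k => i (lift ord0 (lift l k))).
Proof.
move=> hm hq.
set h := i ord0; set i' := fun k => i (lift ord0 k).
rewrite /U ins_sum.
have sv : forall s, size (word i' s) = m by move=> s; rewrite size_word.
rewrite (big_cat_nat _ _ (n := (2*a)%N)) //=; last lia.
rewrite (big_cat_nat _ _ (m := (2*a)%N) (n := (2*a+p)%N)) //=; try lia.
rewrite (big_cat_nat _ _ (m := (2*a+p)%N) (n := (2*a+p+q)%N)) //=; try lia.
have P1 : \sum_(0 <= e < 2 * a) \sum_(s : 'S_m) T a p q t (ins e h (word i' s)) =
   (2 * a)%:R *: \sum_(l < m) eta h (i' l) *: U a.-1 p q t (fun k => i' (lift l k)).
  rewrite (eq_big_nat _ _ (F2 := fun _ => \sum_(l < m) eta h (i' l) *: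
              U a.-1 p q t (fun k => i' (lift l k)))).
    by rewrite sumr_const_nat subn0 scaler_nat.
  move=> e /andP[_ he].
  rewrite (eq_bigr (fun s => eta h (nth h (word i' s) (e - odd e)) *:
      T a.-1 p q t (del (e - odd e) (word i' s)))); last first.
    by move=> s _; rewrite TW_pair // sv; lia.
  have ee : (e - odd e = 2 * e./2)%N by rewrite -halfK mul2n.
  have ee2 : (e = odd e + 2 * e./2)%N by rewrite mul2n odd_double_half.
  have oe : (odd e <= 1)%N by case: (odd e).
  have hlt : (e - odd e < m)%N by lia.
  rewrite (@pos_sum m i' (e - odd e)%N hlt h (fun y w => eta h y *: T a.-1 p q t w)).
  by apply: eq_bigr => l _; rewrite scaler_sumr.
have P2 : \sum_(2 * a <= e < 2 * a + p) \sum_(s : 'S_m) T a p q t (ins e h (word i' s)) =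
   p%:R *: (x h * U a p.-1 q t i').
  rewrite (eq_big_nat _ _ (F2 := fun _ => x h * U a p.-1 q t i')).
    by rewrite sumr_const_nat scaler_nat; congr (_ *+ _); lia.
  move=> e /andP[he1 he2].
  by rewrite /U mulr_sumr; apply: eq_bigr => s _; rewrite TW_x // sv; lia.
have P3 : \sum_(2 * a + p <= e < 2 * a + p + q) \sum_(s : 'S_m) T a p q t (ins e h (word i' s)) =
   q%:R *: (g h * U a p 0 t i').
  clear P1 P2; case: q hq hm => [|[|q]] // _ hm.
    by rewrite addn0 big_geq // scale0r.
  rewrite addn1 big_nat1 scale1r /U mulr_sumr; apply: eq_bigr => s _.
  by rewrite TW_g // sv; lia.
have P4 : \sum_(2 * a + p + q <= e < m.+1) \sum_(s : 'S_m) T a p q t (ins e h (word i' s)) =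
   t%:R *: (U a p q t.-1 i' * D h).
  rewrite (eq_big_nat _ _ (F2 := fun _ => U a p q t.-1 i' * D h)).
    by rewrite sumr_const_nat scaler_nat; congr (_ *+ _); lia.
  move=> e /andP[he1 he2].
  by rewrite /U mulr_suml; apply: eq_bigr => s _; rewrite TW_d //; rewrite ?sv; lia.
by rewrite P1 P2 P3 P4 addrC !addrA.
Qed.


Lemma U_comm m a p q t (i : 'I_m -> 'I_n) j : (2 * a + p <= m)%N ->
  D j * U a p q t i = U a p q t i * D j +
    p%:R *: \sum_(l < m) eta j (i l) *: U a p.-1 q t (fun k => i (lift l k)).
Proof.
move=> hm; rewrite /U mulr_sumr mulr_suml.
rewrite (eq_bigr (fun s => T a p q t (word i s) * D j +
   \sum_(e < p) eta j (nth j (word i s) (2 * a + e)) *: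
        T a p.-1 q t (del (2 * a + e) (word i s)))); last first.
  by move=> s _; rewrite TW_comm // size_word.
rewrite big_split /=; congr (_ + _).
rewrite exchange_big /=.
rewrite (eq_bigr (fun _ => \sum_(l < m) eta j (i l) *: U a p.-1 q t (fun k => i (lift l k)))).
  by rewrite sumr_const card_ord scaler_nat.
move=> e _.
have hlt : (2 * a + e < m)%N by have := ltn_ord e; lia.
rewrite (@pos_sum m i _ hlt j (fun y w => eta j y *: T a p.-1 q t w)).
by apply: eq_bigr => l _; rewrite /U scaler_sumr.
Qed.

End U.


Lemma natinv (C : numClosedFieldType) (u v : nat) : (0 < u)%N ->
  ((u * v)%N%:R : C)^-1 * u%:R = (v%:R)^-1.
Proof.
move=> hu; rewrite natrM invfM mulrAC mulVf ?mul1r //.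
by rewrite pnatr_eq0 -lt0n.
Qed.

Section B.
Variables (C : numClosedFieldType) (A : algType C) (n : nat).
Variables (eta : 'M[C]_n) (x d g : 'I_n -> A).
Hypothesis etaS : forall i j, eta i j = eta j i.
Hypothesis Hxx : forall i j, x i * x j = x j * x i.
Hypothesis Hdd : forall i j, d i * d j = d j * d i.
Hypothesis Hdx : forall i j, d i * x j - x j * d i = (i == j)%:R.
Hypothesis Hgx : forall i j, g i * x j = x j * g i.
Hypothesis Hgd : forall i j, g i * d j = d j * g i.

Local Notation D := (dup eta d).
Local Notation B := (bracket eta x d g).
Local Notation U := (U eta x d g).

Lemma brE m a p q t (i : 'I_m -> 'I_n) :
  B a (Posz p) q t i = (((2 ^ a * a`! * p`! * t`!)%N)%:R)^-1 *: U a p q t i.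
Proof. by []. Qed.

Lemma brN m a p q t (i : 'I_m -> 'I_n) : B a (Negz p) q t i = 0.
Proof. by []. Qed.

Lemma br_comm m a (P : int) q t (i : 'I_m -> 'I_n) j :
  (P + (2 * a + q + t)%N = m%:Z)%R ->
  D j * B a P q t i = B a P q t i * D j +
    \sum_(l < m) eta j (i l) *: B a (P - 1) q t (fun k => i (lift l k)).
Proof.
case: P => [p|p] hP; last first.
  rewrite brN mul0r mulr0 add0r big1 // => l _.
  by rewrite (_ : Negz p - 1 = Negz p.+1) ?brN ?scaler0 //; lia.
rewrite brE -scalerAr U_comm //; last lia.
rewrite scalerDr -scalerAl; congr (_ + _).
case: p hP => [|p] hP.
  by rewrite scale0r scaler0 big1 // => l _; rewrite (_ : Posz 0 - 1 = Negz 0) // brN scaler0.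
rewrite scalerA scaler_sumr; apply: eq_bigr => l _.
rewrite (_ : Posz p.+1 - 1 = Posz p); last lia.
rewrite brE scalerA [RHS]scalerA; congr (_ *: _).
rewrite mulrC; congr (_ * _).
rewrite (_ : (2 ^ a * a`! * p.+1`! * t`! = p.+1 * (2 ^ a * a`! * p`! * t`!))%N).
  by rewrite natinv.
by rewrite factS; ring.
all: try done.
Qed.


Lemma br_rec m a (P : int) q t (i : 'I_m.+1 -> 'I_n) : (q <= 1)%N ->
  (P + (2 * a + q + t)%N = m.+1%:Z)%R ->
  B a P q t i =
  x (i ord0) * B a (P - 1) q t (fun k => i (lift ord0 k)) +
  q%:R *: (g (i ord0) * B a P 0 t (fun k => i (lift ord0 k))) +
  (0 < t)%N%:R *: (B a P q t.-1 (fun k => i (lift ord0 k)) * D (i ord0)) +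
  (0 < a)%N%:R *: \sum_(l < m) eta (i ord0) (i (lift ord0 l)) *:
        B a.-1 P q t (fun k => i (lift ord0 (lift l k))).
Proof.
case: P => [p|p] hq hP; last first.
  rewrite (_ : Negz p - 1 = Negz p.+1); last lia.
  rewrite !brN ?mulr0 ?mul0r ?scaler0 ?add0r big1 ?scaler0 ?addr0 // => l _.
  by rewrite brN scaler0.
rewrite brE U_rec //; last lia.
rewrite !scalerDr; congr (_ + _ + _ + _).
- case: p hP => [|p] hP.
    by rewrite scale0r scaler0 (_ : Posz 0 - 1 = Negz 0) // brN mulr0.
  rewrite (_ : Posz p.+1 - 1 = Posz p); last lia.
  rewrite brE scalerA -scalerAr; congr (_ *: _).
  rewrite (_ : (2 ^ a * a`! * p.+1`! * t`! = p.+1 * (2 ^ a * a`! * p`! * t`!))%N).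
    by rewrite natinv.
  by rewrite factS; ring.
- by rewrite brE scalerA mulrC -scalerA scalerAr.
- case: t hP => [|t] hP; first by rewrite !scale0r scaler0.
  rewrite scale1r brE scalerA -scalerAl; congr (_ *: _).
  rewrite (_ : (2 ^ a * a`! * p`! * t.+1`! = t.+1 * (2 ^ a * a`! * p`! * t`!))%N).
    by rewrite natinv.
  by rewrite factS; ring.
- case: a hP => [|a] hP; first by rewrite !scale0r scaler0.
  rewrite scale1r scalerA scaler_sumr; apply: eq_bigr => l _.
  rewrite brE scalerA [RHS]scalerA; congr (_ *: _).
  rewrite mulrC; congr (_ * _).
  rewrite (_ : (2 ^ a.+1 * a.+1`! * p`! * t`! = (2 * a.+1) * (2 ^ a * a`! * p`! * t`!))%N).
    by rewrite natinv.
  by rewrite factS expnS; ring.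
all: try done.
Qed.

End B.


Lemma cX2 (C : numClosedFieldType) : 2 * cX C ^+ 2 = -1.
Proof.
rewrite /cX expr_div_n sqrCi sqrtCK mulN1r mulrN mulfV //.
by rewrite pnatr_eq0.
Qed.

Section AdX.
Variables (C : numClosedFieldType) (A : algType C) (n : nat).
Variables (eta : 'M[C]_n) (x d g : 'I_n -> A).
Hypothesis etaS : forall i j, eta i j = eta j i.
Hypothesis Hdd : forall i j, d i * d j = d j * d i.
Hypothesis Hdx : forall i j, d i * x j - x j * d i = (i == j)%:R.
Hypothesis Hgx : forall i j, g i * x j = x j * g i.
Hypothesis Hgd : forall i j, g i * d j = d j * g i.
Hypothesis Hgg : forall i j, g i * g j + g j * g i = (2 * eta i j)%:A.

Local Notation D := (dup eta d).
Local Notation X := (Xop d g).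
Local Notation ad := (adX d g).
Local Notation adn := (adXn d g).

Lemma Xx h : X * x h = x h * X + cX C *: g h.
Proof.
rewrite /Xop -scalerAl -scalerAr -scalerDr; congr (_ *: _).
rewrite mulr_suml mulr_sumr.
have -> : g h = \sum_(i < n) g i * (i == h)%:R.
  rewrite (bigD1 h) //= eqxx mulr1 big1 ?addr0 // => i /negPf ->.
  by rewrite mulr0.
rewrite -big_split; apply: eq_bigr => i _ /=.
by rewrite -mulrA -Hdx mulrBr addrC !mulrA Hgx subrK.
Qed.

Lemma XD j : X * D j = D j * X.
Proof.
rewrite /Xop -scalerAl -scalerAr; congr (_ *: _).
rewrite mulr_suml mulr_sumr; apply: eq_bigr => i _.
rewrite /dup !mulr_sumr !mulr_suml; apply: eq_bigr => k _.
rewrite -!scalerAr -!scalerAl; congr (_ *: _).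
by rewrite -mulrA Hdd !mulrA Hgd.
Qed.

Lemma Xg h : X * g h + g h * X = (2 * cX C) *: D h.
Proof.
rewrite /Xop; move: (cX C) => c.
rewrite -scalerAl -scalerAr -scalerDr [in RHS]mulrC -scalerA; congr (_ *: _).
rewrite mulr_suml mulr_sumr -big_split /dup scaler_sumr; apply: eq_bigr => i _ /=.
rewrite -mulrA -Hgd !mulrA -mulrDl Hgg etaS -scalerAl mul1r.
by rewrite scalerA mulrC.
Qed.

Lemma adD pb (u v : A) : ad pb (u + v) = ad pb u + ad pb v.
Proof. by rewrite /adX; move: (Xop d g) ((-1) ^+ pb) => X0 s; rewrite mulrDr mulrDr mulrDl opprD addrACA. Qed.

Lemma adN pb (u : A) : ad pb (- u) = - ad pb u.
Proof. by rewrite /adX; move: (Xop d g) ((-1) ^+ pb) => X0 s; rewrite !mulrN mulNr opprD. Qed.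

Lemma adZ pb c (u : A) : ad pb (c *: u) = c *: ad pb u.
Proof. by rewrite /adX; move: (Xop d g) ((-1) ^+ pb) => X0 s; rewrite -!scalerAr -scalerAl -scalerBr. Qed.

Lemma sgn_comm (pb : bool) (u : A) : (-1) ^+ pb * u = u * (-1) ^+ pb.
Proof. by case: pb => /=; rewrite ?expr0 ?expr1 ?mul1r ?mulr1 ?mulN1r ?mulrN1. Qed.

Lemma ad_x pb h (Y : A) : ad pb (x h * Y) = x h * ad pb Y + cX C *: (g h * Y).
Proof.
rewrite /adX mulrA Xx mulrDl -scalerAl.
move: (Xop d g) ((-1) ^+ pb) (sgn_comm pb) => X0 s sC.
rewrite mulrBr addrAC; congr (_ + _).
by rewrite !mulrA -sC.
Qed.

Lemma ad_D pb h (Y : A) : ad pb (D h * Y) = D h * ad pb Y.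
Proof.
rewrite /adX mulrA XD.
move: (Xop d g) ((-1) ^+ pb) (sgn_comm pb) => X0 s sC.
by rewrite mulrBr !mulrA -sC.
Qed.

Lemma ad_g pb h (Y : A) :
  ad pb (g h * Y) = (2 * cX C) *: (D h * Y) - g h * ad (~~ pb) Y.
Proof.
rewrite /adX scalerAl -Xg mulrDl.
have sgn : (-1) ^+ (~~ pb) = - (-1) ^+ pb :> A by case: pb => /=; rewrite ?expr0 ?expr1 ?opprK.
rewrite sgn.
move: (Xop d g) ((-1) ^+ pb) (sgn_comm pb) => X0 s sC.
rewrite mulrBr !mulNr !mulrN opprK !mulrA -sC.
rewrite opprD addrA; congr (_ - _).
by rewrite addrK.
Qed.


Lemma adnS N pb (b : A) : adn N.+1 pb b = ad (pb (+) odd N) (adn N pb b).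
Proof. by []. Qed.

Lemma comb (a1 a2 a3 : A) (c : C) (o : bool) (k : nat) : 2 * c ^+ 2 = -1 ->
  a1 + c *: a2 + o%:R *: (c *: ((2 * c) *: a3 - a2)) - k%:R *: a3 =
  a1 + (~~ o)%:R *: (c *: a2) - (o + k)%:R *: a3.
Proof.
move=> hc; case: o => /=; rewrite ?scale0r ?scale1r ?addr0 ?add0n //.
rewrite scalerBr scalerA mulrCA -expr2 hc scaleN1r (addrC (- a3)) addrA addrK.
by rewrite natrD scalerDl scale1r opprD addrA.
Qed.

Lemma adn_x h (b : A) N :
  adn N false (x h * b) = x h * adn N false b +
    (odd N)%:R *: (cX C *: (g h * adn N.-1 false b)) -
    (N./2)%:R *: (D h * adn N.-2 false b).
Proof.
elim: N => [|N IH]; first by rewrite /= !scale0r addr0 subr0.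
rewrite adnS IH /= adD adN adD !adZ ad_x.
have eG : (odd N)%:R *: (cX C *: ad (odd N) (g h * adn N.-1 false b)) =
    (odd N)%:R *: (cX C *: ((2 * cX C) *: (D h * adn N.-1 false b) - g h * adn N false b)).
  case: N {IH} => [|M]; first by rewrite !scale0r.
  by rewrite ad_g adnS /= negbK.
have eD : (N./2)%:R *: ad (odd N) (D h * adn N.-2 false b) =
    (N./2)%:R *: (D h * adn N.-1 false b).
  case: N {IH eG} => [|[|M]]; rewrite ?scale0r //.
  by rewrite ad_D adnS /= negbK.
rewrite eG eD uphalf_half.
by rewrite comb ?cX2.
Qed.

End AdX.


Section Main.
Variables (C : numClosedFieldType) (A : algType C) (n : nat).
Variables (eta : 'M[C]_n) (x d g : 'I_n -> A).
Hypothesis etaS : forall i j, eta i j = eta j i.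
Hypothesis Hxx : forall i j, x i * x j = x j * x i.
Hypothesis Hdd : forall i j, d i * d j = d j * d i.
Hypothesis Hdx : forall i j, d i * x j - x j * d i = (i == j)%:R.
Hypothesis Hgx : forall i j, g i * x j = x j * g i.
Hypothesis Hgd : forall i j, g i * d j = d j * g i.
Hypothesis Hgg : forall i j, g i * g j + g j * g i = (2 * eta i j)%:A.

Local Notation D := (dup eta d).
Local Notation B := (bracket eta x d g).
Local Notation adn := (adXn d g).

Lemma adn_one N : adn N.+1 false 1 = 0.
Proof.
elim: N => [|N IH]; first by rewrite /= /adX expr0 !mul1r mulr1 subrr.
by rewrite adnS IH /adX !mulr0 mul0r subrr.
Qed.

Lemma br_lt0 m a P q t (i : 'I_m -> 'I_n) : (P < 0)%R -> B a P q t i = 0.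
Proof. by case: P => [p|p] //; lia. Qed.

Lemma br_00 (i : 'I_0 -> 'I_n) : B 0 0 0 0 i = 1.
Proof.
rewrite brE /U (_ : (2 ^ 0 * 0`! * 0`! * 0`!)%N = 1%N) // invr1 scale1r.
rewrite (eq_bigr (fun _ => 1)); last first.
  move=> s _; rewrite /Tword /word.
  have -> : enum 'I_0 = [::] by apply: size0nil; rewrite size_enum_ord.
  by rewrite /= !big_nil scale1r !mulr1.
by rewrite sumr_const card_Sn.
Qed.


Lemma br_00' a P q t (i : 'I_0 -> 'I_n) : a = 0%N -> P = 0 -> q = 0%N -> t = 0%N ->
  B a P q t i = 1.
Proof. by move=> -> -> -> ->; apply: br_00. Qed.

Lemma main_gen m (i : 'I_m -> 'I_n) k r : (r <= 1)%N ->
  adn (2 * k + r) false (\prod_(j < m) x (i j)) =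
  ((-1) ^+ k * (k`!)%:R * cX C ^+ r) *:
    \sum_(t < k.+1) B t (m%:Z - k%:Z - t%:Z - r%:Z) r (k - t) i.
Proof.
elim: m i k r => [|m IH] i k r hr.
  rewrite big_ord0.
  case: k => [|k]; first case: r hr => [|[|r]] // _.
  - by rewrite big_ord1 br_00' // expr0 !mul1r scale1r.
  - rewrite (_ : (2 * 0 + 1 = 0.+1)%N) // adn_one big1 ?scaler0 // => t _.
    by apply: br_lt0; have := ltn_ord t; lia.
  - rewrite (_ : (2 * k.+1 + r = (2 * k + 1 + r).+1)%N); last lia.
    rewrite adn_one big1 ?scaler0 // => t _.
    by apply: br_lt0; have := ltn_ord t; lia.
rewrite big_ord_recl (@adn_x _ _ _ eta x d g) //.
have IHi := IH (fun j => i (lift ord0 j)).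
have ho : (odd (2 * k + r) : nat) = r.
  by case: r hr => [|[|r]] // _; rewrite ?addn0 ?addn1 ?oddS mul2n odd_double.
have hh : ((2 * k + r)./2 = k)%N.
  by case: r hr {ho} => [|[|r]] // _; rewrite ?addn0 ?addn1 mul2n ?doubleK // -[k in RHS](half_bit_double k true) add1n.
rewrite ho hh.
rewrite (eq_bigr (fun t : 'I_k.+1 =>
   x (i ord0) * B t (m%:Z - k%:Z - t%:Z - r%:Z) r (k - t) (fun j => i (lift ord0 j)) +
   r%:R *: (g (i ord0) * B t (m.+1%:Z - k%:Z - t%:Z - r%:Z) 0 (k - t) (fun j => i (lift ord0 j))) +
   (0 < k - t)%N%:R *: (B t (m.+1%:Z - k%:Z - t%:Z - r%:Z) r (k - t).-1 (fun j => i (lift ord0 j)) * D (i ord0)) +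
   (0 < t)%N%:R *: \sum_(l < m) eta (i ord0) (i (lift ord0 l)) *:
       B t.-1 (m.+1%:Z - k%:Z - t%:Z - r%:Z) r (k - t) (fun k0 => i (lift ord0 (lift l k0))))); last first.
  move=> t _; have := ltn_ord t => ht.
  rewrite br_rec //; last lia.
  by rewrite (_ : m.+1%:Z - k%:Z - t%:Z - r%:Z - 1 = m%:Z - k%:Z - t%:Z - r%:Z) //; lia.
rewrite !big_split /= !scalerDr -[RHS]addrA.
congr (_ + _ + _).
- by rewrite IHi // -scalerAr mulr_sumr.
- case: r hr {ho hh} => [|[|r]] // _.
    by rewrite !scale0r big1 ?scaler0 // => t _; rewrite scale0r.
  rewrite scale1r (_ : ((2 * k + 1).-1 = 2 * k + 0)%N); last lia.
  rewrite IHi // -scalerAr scalerA mulr_sumr; congr (_ *: _).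
    by rewrite expr1 expr0 mulr1 mulrC.
  apply: eq_bigr => t _; rewrite scale1r; congr (_ * _).
  by rewrite (_ : m.+1%:Z - k%:Z - t%:Z - 1%:Z = m%:Z - k%:Z - t%:Z - 0%:Z) //; lia.
case: k IHi {ho hh} => [|k] IHi.
  rewrite !big_ord1 /=.
  by rewrite !scale0r scaler0 addr0 oppr0.
rewrite (_ : ((2 * k.+1 + r).-2 = 2 * k + r)%N); last lia.
rewrite IHi // -scalerAr mulr_sumr.
rewrite (eq_bigr (fun t : 'I_k.+1 =>
   B t (m%:Z - k%:Z - t%:Z - r%:Z) r (k - t) (fun j => i (lift ord0 j)) * D (i ord0) +
   \sum_(l < m) eta (i ord0) (i (lift ord0 l)) *:
      B t (m%:Z - k%:Z - t%:Z - r%:Z - 1) r (k - t) (fun k0 => i (lift ord0 (lift l k0))))); last first.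
  by move=> t _; rewrite br_comm //; have := ltn_ord t; lia.
rewrite big_split /= (@big_ord_recr _ _ _ k.+1) /= (@big_ord_recl _ _ _ k.+1) /=.
rewrite subnn /= !scale0r addr0 add0r scalerA -scaleNr -scalerDr.
congr (_ *: (_ + _)).
- by rewrite exprS factS natrM; ring.
- apply: eq_bigr => t _; have := ltn_ord t => ht.
  rewrite (_ : (0 < k.+1 - t)%N = true); last lia.
  rewrite scale1r (_ : ((k.+1 - t).-1 = k - t)%N); last lia.
  by rewrite (_ : m.+1%:Z - k.+1%:Z - t%:Z - r%:Z = m%:Z - k%:Z - t%:Z - r%:Z) //; lia.
apply: eq_bigr => t _; have := ltn_ord t => ht.
rewrite scale1r add0n /bump /= add1n (_ : (k.+1 - t.+1 = k - t)%N) //.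
apply: eq_bigr => l _; congr (_ *: _).
by rewrite (_ : m.+1%:Z - k.+1%:Z - t.+1%:Z - r%:Z = m%:Z - k%:Z - t%:Z - r%:Z - 1) //; lia.
Qed.

End Main.


Unset Implicit Arguments.

Theorem lemma5p3 (C : numClosedFieldType) (A : algType C) (n : nat)
  (eta : 'M[C]_n) (x d g : 'I_n -> A) :
  (0 < n)%N -> eta^T = eta -> eta \in unitmx ->
  WC_relations eta x d g ->
  forall (m : nat) (i : 'I_m -> 'I_n), (0 < m)%N ->
  forall (k r : nat), (r <= 1)%N ->
  adXn d g (2 * k + r) false (\prod_(j < m) x (i j)) =
  ((-1) ^+ k * (k`!)%:R * cX C ^+ r) *:
    \sum_(t < k.+1)
      bracket eta x d g t (m%:Z - k%:Z - t%:Z - r%:Z) r (k - t) i.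
Proof.
move=> _ Hsym _ [[Hxx Hdd Hdx Hgx Hgd] Hgg] m i _ k r hr.
have etaS : forall a b, eta a b = eta b a by move=> a b; rewrite -{1}Hsym mxE.
exact: (main_gen etaS Hxx Hdd Hdx Hgx Hgd Hgg).
Qed.
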